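(* Let $K$ be a non-archimedean local field with $\mathrm{char}(K)\neq 2$, let $i=\sqrt{-1}$, and let $S$ be the set of all quadruples $(A,B,C,D)\in\mathrm{SL}_2(K(i))^4$ such that $A$ is diagonal and $ABA^{-1}B^{-1}CDC^{-1}D^{-1}=-I$. For every word $w$ in the free group $F_4$ of rank four, there exists $(A,B,C,D)\in S$ such that $\pi w(A,B,C,D)$ does not have order $2$.
   Context: For a word $w\in F_4$ and $(A,B,C,D)\in\mathrm{SL}_2(K(i))^4$, $w(A,B,C,D)$ is the evaluation of $w$ at $(A,B,C,D)$, and $\pi w(A,B,C,D)$ is its image in $\mathrm{PSL}_2(K(i))$ under the quotient map $\pi$. *)

(* Defs.v *)
From HB Require Import structures.
From mathcomp Require Import all_boot all_order all_algebra.
Set Implicit Arguments. Unset Strict Implicit. Unset Printing Implicit Defensive.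
Import Order.TTheory GRing.Theory Num.Theory.
Local Open Scope ring_scope.

(* The valuation v is only meaningful on nonzero elements (v 0 = +oo). *)

Definition vge (K : fieldType) (v : K -> int) (x : K) (n : int) : Prop :=
  x = 0 \/ (n <= v x)%R.

Definition is_discrete_valuation (K : fieldType) (v : K -> int) : Prop :=
  [/\ (forall x y : K, x != 0 -> y != 0 -> v (x * y) = v x + v y),
      (forall x y : K, x != 0 -> y != 0 -> x + y != 0 ->
          Order.min (v x) (v y) <= v (x + y)) &
      (exists pi : K, pi != 0 /\ v pi = 1)].

(* the residue field O/m is finite: finitely many representatives *)
Definition finite_residue_field (K : fieldType) (v : K -> int) : Prop :=
  exists s : seq K, forall x : K, vge v x 0 ->
    exists2 r, r \in s & vge v (x - r) 1.

Definition v_cauchy (K : fieldType) (v : K -> int) (u : nat -> K) : Prop :=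
  forall N : int, exists M : nat, forall m n : nat,
    (M <= m)%N -> (M <= n)%N -> vge v (u m - u n) N.

Definition v_converges (K : fieldType) (v : K -> int) (u : nat -> K) (l : K) :=
  forall N : int, exists M : nat, forall n : nat, (M <= n)%N -> vge v (u n - l) N.

Definition v_complete (K : fieldType) (v : K -> int) : Prop :=
  forall u : nat -> K, v_cauchy v u -> exists l, v_converges v u l.

Definition nonarch_local_field (K : fieldType) : Prop :=
  exists v : K -> int,
    [/\ is_discrete_valuation v, v_complete v & finite_residue_field v].

Definition is_SL2 (L : fieldType) (M : 'M[L]_2) : Prop := \det M = 1.

Definition is_diag2 (L : fieldType) (M : 'M[L]_2) : Prop :=
  M 0 1 = 0 /\ M 1 0 = 0.

Definition comm2 (L : fieldType) (X Y : 'M[L]_2) : 'M[L]_2 :=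
  X *m Y *m invmx X *m invmx Y.

Definition in_S (L : fieldType) (A B C D : 'M[L]_2) : Prop :=
  [/\ is_SL2 A, is_SL2 B, is_SL2 C, is_SL2 D &
      (is_diag2 A /\ comm2 A B *m comm2 C D = - 1%:M)].

(* a word in the free group F_4 on generators x_0..x_3: a list of letters
   (j, e) standing for x_j (e = false) or x_j^{-1} (e = true) *)
Definition word4 := seq ('I_4 * bool).

Definition gen4 (L : fieldType) (A B C D : 'M[L]_2) (j : 'I_4) : 'M[L]_2 :=
  match val j with 0%N => A | 1%N => B | 2%N => C | _ => D end.

Definition eval_word (L : fieldType) (w : word4) (A B C D : 'M[L]_2) : 'M[L]_2 :=
  foldr (fun le acc =>
           let g := gen4 A B C D le.1 in (if le.2 then invmx g else g) *m acc)
        1%:M w.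

(* the image of M in PSL_2 = SL_2 / {±I} has order exactly 2 *)
Definition psl_order2 (L : fieldType) (M : 'M[L]_2) : Prop :=
  (M *m M = 1%:M \/ M *m M = - 1%:M) /\ ~ (M = 1%:M \/ M = - 1%:M).

(* Main.v *)
Require Import Defs.
From HB Require Import structures.
From mathcomp Require Import all_boot all_order all_algebra.
Import GRing.Theory.
Local Open Scope ring_scope.

Section M.
Variable L : fieldType.
Definition mk2 (x y z t : L) : 'M[L]_2 :=
  \matrix_(r < 2, c < 2) if r == 0 then (if c == 0 then x else y) else (if c == 0 then z else t).

Lemma mk2_mul x y z t x' y' z' t' :
  mk2 x y z t *m mk2 x' y' z' t' =
  mk2 (x*x' + y*z') (x*y' + y*t') (z*x' + t*z') (z*y' + t*t').
Proof.
apply/matrixP => r c; rewrite !mxE !big_ord_recl big_ord0 !mxE /=.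
by case: r => [[|[|//]] ?]; case: c => [[|[|//]] ?] /=; rewrite addr0.
Qed.

Lemma mk2N x y z t : - mk2 x y z t = mk2 (-x) (-y) (-z) (-t).
Proof.
by apply/matrixP => r c; rewrite !mxE; case: (r == 0); case: (c == 0).
Qed.

Lemma mk2_1 : 1%:M = mk2 1 0 0 1.
Proof.
apply/matrixP => r c; rewrite !mxE.
by case: r => [[|[|//]] ?]; case: c => [[|[|//]] ?].
Qed.

Lemma mk2_det x y z t : \det (mk2 x y z t) = x * t - y * z.
Proof.
rewrite (expand_det_row _ 0) !big_ord_recl big_ord0 /cofactor !det_mx11 !mxE /=.
by rewrite /bump /= expr0 expr1 !mul1r mulN1r addr0 mulrN.
Qed.
End M.
Arguments mk2 {L}.

Section G.
Variables (L : fieldType) (i : L).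
Hypothesis Hi : i ^+ 2 = -1.
Lemma ii : i * i = -1. Proof. by rewrite -expr2. Qed.

Definition ma := mk2 i 0 0 (-i).
Definition mb := mk2 (0:L) 1 (-1) 0.
Definition mab := mk2 0 i i 0.
Definition m (p q : bool) : 'M[L]_2 :=
  if p then (if q then mab else ma) else (if q then mb else 1%:M).
Definition pm (X Y : 'M[L]_2) := X = Y \/ X = - Y.

Ltac simp := rewrite ?(mulr0, mul0r, addr0, add0r, mulr1, mul1r, mulrN, mulNr, opprK, ii, oppr0).

Lemma m_mul p q p' q' : pm (m p q *m m p' q') (m (p (+) p') (q (+) q')).
Proof.
case: p; case: q; case: p'; case: q';
rewrite /m /ma /mb /mab /= ?mk2_1 mk2_mul; simp;
first [left; done | right; rewrite mk2N; simp; done].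
Qed.

Lemma inv_eq (A B : 'M[L]_2) : A *m B = 1%:M -> invmx A = B.
Proof.
move=> H; have [uA _] := mulmx1_unit H.
by rewrite -[invmx A]mulmx1 -H mulmxA mulVmx // mul1mx.
Qed.

Lemma pm_mul X X' Y Y' : pm X X' -> pm Y Y' -> pm (X *m Y) (X' *m Y').
Proof.
by case=> ->; case=> ->; rewrite ?mulNmx ?mulmxN ?opprK; [left|right|right|left].
Qed.

Lemma pm_trans X Y Z : pm X Y -> pm Y Z -> pm X Z.
Proof. by case=> ->; case=> ->; rewrite ?opprK; [left|right|right|left]. Qed.

Lemma m_inv p q : pm (invmx (m p q)) (m p q).
Proof.
have := m_mul p q p q; rewrite !addbb /= => -[] H.
  by left; apply: inv_eq.
by right; apply: inv_eq; rewrite mulmxN H opprK.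
Qed.

Lemma m_det p q : \det (m p q) = 1.
Proof.
case: p; case: q; rewrite /m /ma /mb /mab ?mk2_1 mk2_det; simp; by [].
Qed.

Lemma m_unit p q : m p q \in unitmx.
Proof. by rewrite unitmxE m_det unitr1. Qed.

Definition sel (b0 b1 b2 b3 : bool) (j : 'I_4) : bool :=
  match val j with 0%N => b0 | 1%N => b1 | 2%N => b2 | _ => b3 end.

Lemma gen_m x0 x1 x2 x3 y0 y1 y2 y3 j :
  gen4 (m x0 y0) (m x1 y1) (m x2 y2) (m x3 y3) j
  = m (sel x0 x1 x2 x3 j) (sel y0 y1 y2 y3 j).
Proof. by rewrite /gen4 /sel; case: (val j) => [|[|[|]]]. Qed.

Definition F (s : 'I_4 -> bool) (w : word4) :=
  foldr (fun l acc => s l.1 (+) acc) false w.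

Definition par (k : nat) (w : word4) :=
  foldr (fun (l : 'I_4 * bool) acc => (val l.1 == k) (+) acc) false w.

Lemma F_par x0 x1 x2 x3 w :
  F (sel x0 x1 x2 x3) w =
  (x0 && par 0 w) (+) (x1 && par 1 w) (+) (x2 && par 2 w) (+) (x3 && par 3 w).
Proof.
elim: w => [|[j e] w IH] /=; first by case: x0; case: x1; case: x2; case: x3.
rewrite /F /= -/(F _ w) IH /sel.
move: (par 0 w) (par 1 w) (par 2 w) (par 3 w) => p0 p1 p2 p3.
case: j => [[|[|[|[|//]]]] ?] /=;
clear IH; by case: x0; case: x1; case: x2; case: x3; case: p0; case: p1; case: p2; case: p3.
Qed.

Lemma eval_m x0 x1 x2 x3 y0 y1 y2 y3 w :
  pm (eval_word w (m x0 y0) (m x1 y1) (m x2 y2) (m x3 y3))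
     (m (F (sel x0 x1 x2 x3) w) (F (sel y0 y1 y2 y3) w)).
Proof.
elim: w => [|[j e] w IH] /=; first by left.
rewrite gen_m.
apply: pm_trans (m_mul _ _ _ _).
apply: pm_mul IH.
by case: e; [apply: m_inv | left].
Qed.

Lemma comm_ab : comm2 (m true false) (m false true) = - 1%:M.
Proof.
rewrite /comm2 /m (@inv_eq ma (mk2 (-i) 0 0 i)); last first.
  by rewrite /ma mk2_mul mk2_1; simp.
rewrite (@inv_eq mb (mk2 0 (-1) 1 0)); last first.
  by rewrite /mb mk2_mul mk2_1; simp.
by rewrite /ma /mb !mk2_mul mk2_1 mk2N; simp.
Qed.

Lemma comm_X1 (X : 'M[L]_2) : X \in unitmx -> comm2 X 1%:M = 1%:M.
Proof. by move=> u; rewrite /comm2 invmx1 !mulmx1 mulmxV. Qed.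
Lemma comm_1X (X : 'M[L]_2) : X \in unitmx -> comm2 1%:M X = 1%:M.
Proof. by move=> u; rewrite /comm2 invmx1 mulmx1 mul1mx mulmxV. Qed.

Lemma not_o2 (M : 'M[L]_2) : pm M (m false false) -> ~ psl_order2 M.
Proof. by move=> H [_ []]; case: H; [left|right]. Qed.

End G.
Arguments m {L}.

Lemma m_diag (L : fieldType) (i : L) p : is_diag2 (m i p false).
Proof. by case: p; rewrite /m /ma ?mk2_1 /is_diag2 !mxE. Qed.

Theorem lemma4p3 (K : fieldType) (HK : nonarch_local_field K)
  (Hchar : (2%:R : K) != 0)
  (L : fieldType) (f : {rmorphism K -> L}) (i : L)
  (Hi : i ^+ 2 = -1) (HKi : forall x : L, exists a b : K, x = f a + f b * i)
  (w : word4) :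
  exists A B C D : 'M[L]_2, in_S A B C D /\ ~ psl_order2 (eval_word w A B C D).
Proof.
have SL p q : is_SL2 (m i p q) by apply: m_det.
case hC: (par 2 w).
  exists (m i true false), (m i false true), (m i (par 0 w) (par 1 w)), (m i false false).
  split.
    split; rewrite ?SL //; split; first exact: m_diag.
    by rewrite (@comm_ab L i Hi) [m i false false]/= comm_X1 ?m_unit // mulmx1.
  apply: not_o2; apply: (@pm_trans L _ _ _ (@eval_m L i Hi _ _ _ _ _ _ _ _ w)).
  rewrite !F_par hC; left; congr m; by case: (par 0 w); case: (par 1 w); case: (par 3 w).
case hD: (par 3 w).
  exists (m i true false), (m i false true), (m i false false), (m i (par 0 w) (par 1 w)).
  split.
    split; rewrite ?SL //; split; first exact: m_diag.
    by rewrite (@comm_ab L i Hi) [m i false false]/= comm_1X ?m_unit // mulmx1.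
  apply: not_o2; apply: (@pm_trans L _ _ _ (@eval_m L i Hi _ _ _ _ _ _ _ _ w)).
  rewrite !F_par hC hD; left; congr m; by case: (par 0 w); case: (par 1 w).
exists (m i false false), (m i false false), (m i true false), (m i false true).
split.
  split; rewrite ?SL //; split; first exact: m_diag.
  by rewrite (@comm_ab L i Hi) [m i false false]/= comm_X1 ?unitmx1 // mul1mx.
apply: not_o2; apply: (@pm_trans L _ _ _ (@eval_m L i Hi _ _ _ _ _ _ _ _ w)).
rewrite !F_par hC hD; left; congr m; by case: (par 0 w); case: (par 1 w).
Qed.
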